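(* There exists a universal constant $K>0$ such that the following holds. Let $d\ge 1$, let $q$ be a probability distribution on $[d]=\{1,\dots,d\}$, let $\varepsilon>0$, and let $T\ge K\cdot\frac{\sqrt d}{\varepsilon^2}$. Then there is an algorithm which, given $c=2$ independent samples from each of (unknown) probability distributions $p_1,\dots,p_T$ on $[d]$ (all $2T$ samples mutually independent), distinguishes with probability at least $0.99$ the case $p_{\mathrm{avg}}=q$ from the case $d_{\mathrm{TV}}(p_{\mathrm{avg}},q)>\varepsilon$, where $p_{\mathrm{avg}}=\frac1T\sum_{t=1}^T p_t$.
   Context: $d_{\mathrm{TV}}$ denotes total variation distance. ''Distinguishes with probability at least $0.99$'' means: the algorithm (which may depend on $d,q,\varepsilon,T$ but not on the $p_t$) outputs ''accept'' or ''reject'', and it accepts with probability at least $0.99$ whenever the first case holds and rejects with probability at least $0.99$ whenever the second case holds. *)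

(* Defs.v *)
From HB Require Import structures.
From mathcomp Require Import all_boot all_order all_algebra.
From mathcomp Require Import reals Rstruct.
From Stdlib Require Rdefinitions.
Notation R := Rdefinitions.R.
Set Implicit Arguments. Unset Strict Implicit. Unset Printing Implicit Defensive.
Import Order.TTheory GRing.Theory Num.Theory.
Local Open Scope ring_scope.

(* A probability distribution on [d] = 'I_d (elements 0..d-1). *)
Definition is_distr (d : nat) (p : {ffun 'I_d -> R}) : Prop :=
  (forall i, 0 <= p i) /\ \sum_(i < d) p i = 1.

Definition dTV (d : nat) (p q : {ffun 'I_d -> R}) : R :=
  (\sum_(i < d) `|p i - q i|) / 2.

Definition pavg (d T : nat) (p : 'I_T -> {ffun 'I_d -> R}) : {ffun 'I_d -> R} :=
  [ffun i => (\sum_(t < T) p t i) / T%:R].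

(* A sample record: s (t, j) is the j-th sample (j < 2) from p_t. *)
Definition samples (d T : nat) := {ffun 'I_T * 'I_2 -> 'I_d}.

Definition sample_prob (d T : nat) (p : 'I_T -> {ffun 'I_d -> R})
  (s : samples d T) : R :=
  \prod_(t < T) \prod_(j < 2) p t (s (t, j)).

(* A (possibly randomized) algorithm is described by its acceptance
   probability A s in [0,1] on every sample record s. *)
Definition is_algorithm (d T : nat) (A : samples d T -> R) : Prop :=
  forall s, 0 <= A s <= 1.

Definition accept_prob (d T : nat) (A : samples d T -> R)
  (p : 'I_T -> {ffun 'I_d -> R}) : R :=
  \sum_(s : samples d T) sample_prob p s * A s.

(* Main.v *)
Require Import Defs.
From HB Require Import structures.
From mathcomp Require Import all_boot all_order all_algebra.
From mathcomp Require Import reals Rstruct lra ring.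
Import Order.TTheory GRing.Theory Num.Theory.
Local Open Scope ring_scope.

Section Expect.
Variables (d T : nat) (p : 'I_T -> {ffun 'I_d -> R}).
Hypothesis Hp : forall t, is_distr (p t).

Definition pi1 (x : {ffun 'I_T -> 'I_d}) : R := \prod_(t < T) p t (x t).
Definition E1 (F : {ffun 'I_T -> 'I_d} -> R) : R := \sum_x pi1 x * F x.
Definition Xs (s : samples d T) : {ffun 'I_T -> 'I_d} := [ffun t => s (t, ord0)].
Definition Ys (s : samples d T) : {ffun 'I_T -> 'I_d} := [ffun t => s (t, ord_max)].
Definition joins (u : {ffun 'I_T -> 'I_d} * {ffun 'I_T -> 'I_d}) : samples d T :=
  [ffun k => if k.2 == ord0 then u.1 k.1 else u.2 k.1].

Lemma ord2_cases (j : 'I_2) : j = ord0 \/ j = ord_max.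
Proof.
case: j => [[|[|n]] Hn]; [left|right|by []]; exact: val_inj.
Qed.

Lemma joinsK : cancel joins (fun s => (Xs s, Ys s)).
Proof.
move=> [x y] /=; congr pair; apply/ffunP => t; rewrite !ffunE //=.
Qed.

Lemma joinsK' : cancel (fun s => (Xs s, Ys s)) joins.
Proof.
move=> s; apply/ffunP => [[t j]]; rewrite !ffunE /=.
case: (ord2_cases j) => ->; rewrite ?eqxx ?ffunE //.
Qed.

Lemma E_split (F G : {ffun 'I_T -> 'I_d} -> R) :
  \sum_(s : samples d T) sample_prob p s * (F (Xs s) * G (Ys s)) = E1 F * E1 G.
Proof.
have -> : E1 F * E1 G = \sum_x \sum_y (pi1 x * F x) * (pi1 y * G y).
  rewrite /E1 big_distrl; apply: eq_bigr => x _; by rewrite big_distrr.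
rewrite pair_big /=.
rewrite (reindex joins) /=; last first.
  by exists (fun s => (Xs s, Ys s)) => u _; [apply: joinsK | apply: joinsK'].
apply: eq_bigr => [[x y]] _ /=.
have -> : Xs (joins (x, y)) = x by apply/ffunP => t; rewrite !ffunE.
have -> : Ys (joins (x, y)) = y by apply/ffunP => t; rewrite !ffunE.
have -> : sample_prob p (joins (x, y)) = pi1 x * pi1 y.
  rewrite /sample_prob /pi1 -big_split /=; apply: eq_bigr => t _.
  rewrite big_ord_recr /= big_ord_recr /= big_ord0 mul1r !ffunE /=.
  done.
ring.
Qed.

Lemma sum1 t : \sum_i p t i = 1.
Proof. by case: (Hp t). Qed.

Lemma E1_prod (g : 'I_T -> 'I_d -> R) :
  E1 (fun x => \prod_t g t (x t)) = \prod_t \sum_i p t i * g t i.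
Proof.
rewrite bigA_distr_bigA /E1; apply: eq_bigr => x _; by rewrite -big_split.
Qed.

Lemma prod_pick (t0 : 'I_T) (f : 'I_T -> R) :
  \prod_t (if t == t0 then f t else 1) = f t0.
Proof.
rewrite (bigD1 t0) //= eqxx big1 ?mulr1 // => t /negbTE -> //.
Qed.

Lemma E1_two (t0 t1 : 'I_T) (f h : 'I_d -> R) :
  E1 (fun x => f (x t0) * h (x t1)) =
  if t0 == t1 then \sum_i p t0 i * (f i * h i)
  else (\sum_i p t0 i * f i) * (\sum_i p t1 i * h i).
Proof.
pose g t i := (if t == t0 then f i else 1) * (if t == t1 then h i else 1).
have -> : E1 (fun x => f (x t0) * h (x t1)) = E1 (fun x => \prod_t g t (x t)).
  rewrite /E1; apply: eq_bigr => x _; congr (_ * _).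
  rewrite /g big_split /=.
  by rewrite (prod_pick t0 (fun t => f (x t))) (prod_pick t1 (fun t => h (x t))).
rewrite E1_prod (bigD1 t0) //= /g eqxx.
case: eqP => [E|/eqP Hne].
  subst t1; rewrite [X in _ * X]big1 ?mulr1 //.
  move=> t /negbTE Ht; rewrite Ht.
  by under eq_bigr do rewrite !mulr1; rewrite sum1.
rewrite (bigD1 t1) /=; last by rewrite eq_sym.
rewrite eqxx eq_sym (negbTE Hne).
rewrite [X in _ * (_ * X)]big1 ?mulr1.
  congr (_ * _); apply: eq_bigr => i _; rewrite ?mulr1 ?mul1r //.
move=> t /andP [Ht0 Ht1]; rewrite (negbTE Ht0) (negbTE Ht1).
by under eq_bigr do rewrite !mulr1; rewrite sum1.
Qed.


Lemma E1_ext F G : (forall x, F x = G x) -> E1 F = E1 G.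
Proof. by move=> H; rewrite /E1; apply: eq_bigr => x _; rewrite H. Qed.

Lemma E1_lin (F : 'I_T -> {ffun 'I_T -> 'I_d} -> R) :
  E1 (fun x => \sum_t F t x) = \sum_t E1 (F t).
Proof.
rewrite /E1; under eq_bigr do rewrite mulr_sumr.
by rewrite exchange_big.
Qed.

Lemma sum_ind t c i : \sum_y p t y * (c * (y == i)%:R) = c * p t i.
Proof.
rewrite (bigD1 i) //= eqxx big1 ?addr0; first by rewrite /= ?mulr1n; ring.
by move=> y /negbTE ->; rewrite mulr0 mulr0.
Qed.

Lemma sum_ind2 t c i j :
  \sum_y p t y * (c * ((y == i)%:R * (y == j)%:R)) = c * ((i == j)%:R * p t i).
Proof.
rewrite (bigD1 i) //= eqxx big1 ?addr0; first by rewrite /= ?mulr1n; ring.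
by move=> y /negbTE ->; rewrite mul0r mulr0 mulr0.
Qed.

Lemma sum_const t c : \sum_y p t y * c = c.
Proof. by rewrite -mulr_suml sum1 mul1r. Qed.

Definition aa (q : 'I_d -> R) (i y : 'I_d) : R := (y == i)%:R - q i.
Definition Aof q i (x : {ffun 'I_T -> 'I_d}) : R := \sum_t aa q i (x t).
Definition Dl (q : 'I_d -> R) i : R := \sum_t (p t i - q i).
Definition Sg i j : R := \sum_t ((i == j)%:R * p t i - p t i * p t j).

Lemma sum_aa q t i : \sum_y p t y * aa q i y = p t i - q i.
Proof.
rewrite /aa.
rewrite (eq_bigr (fun y => p t y * (1 * (y == i)%:R) - p t y * q i)); last by move=> y _; ring.
by rewrite sumrB sum_ind sum_const mul1r.
Qed.

Lemma E1_A q i : E1 (Aof q i) = Dl q i.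
Proof.
rewrite /Aof E1_lin /Dl; apply: eq_bigr => t _.
transitivity (E1 (fun x => aa q i (x t) * (fun _ => 1) (x t))).
  by apply: E1_ext => x; rewrite mulr1.
rewrite (E1_two t t (aa q i) (fun _ => 1)) eqxx.
by under eq_bigr do rewrite mulr1; rewrite sum_aa.
Qed.

Lemma sum_aa2 q t i j : \sum_y p t y * (aa q i y * aa q j y) =
  (i == j)%:R * p t i - q j * p t i - q i * p t j + q i * q j.
Proof.
rewrite /aa.
rewrite (eq_bigr (fun y => p t y * (1 * ((y == i)%:R * (y == j)%:R)) - p t y * (q j * (y == i)%:R)
   - p t y * (q i * (y == j)%:R) + p t y * (q i * q j))); last by move=> y _; ring.
rewrite big_split /= !sumrB sum_ind2 !sum_ind sum_const; ring.
Qed.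

Lemma E1_AA q i j :
  E1 (fun x => Aof q i x * Aof q j x) = Dl q i * Dl q j + Sg i j.
Proof.
rewrite (E1_ext _ (fun x => \sum_t \sum_u aa q i (x t) * aa q j (x u))); last first.
  by move=> x; rewrite /Aof big_distrl; apply: eq_bigr => t _; rewrite big_distrr.
rewrite E1_lin.
under eq_bigr do rewrite E1_lin.
under eq_bigr do under eq_bigr do rewrite E1_two.
rewrite /Dl /Sg big_distrl /= -big_split /=; apply: eq_bigr => t _.
rewrite big_distrr /=.
rewrite (bigD1 t) //= eqxx [X in _ = X + _](bigD1 t) //=.
rewrite (eq_bigr (fun u => (\sum_i0 p t i0 * aa q i i0) * (\sum_i0 p u i0 * aa q j i0))); last first.
  by move=> u /negbTE Hu; rewrite eq_sym Hu.
rewrite !sum_aa sum_aa2.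
under eq_bigr do rewrite !sum_aa.
set S := \sum_(u | u != t) _.
ring.
Qed.


Definition Ustat q (w : 'I_d -> R) (s : samples d T) : R :=
  \sum_i w i * (Aof q i (Xs s) * Aof q i (Ys s)).
Definition EE (F : samples d T -> R) : R := \sum_s sample_prob p s * F s.

Lemma E1_one : E1 (fun _ => 1) = 1.
Proof.
transitivity (E1 (fun x => \prod_t (fun _ _ => 1) t (x t))).
  by apply: E1_ext => x; rewrite big1_eq.
rewrite (E1_prod (fun _ _ => 1)); apply: big1 => t _; by rewrite sum_const.
Qed.

Lemma EE_one : EE (fun _ => 1) = 1.
Proof.
transitivity (EE (fun s => (fun _ => 1) (Xs s) * (fun _ => 1) (Ys s))).
  by rewrite /EE; apply: eq_bigr => s _ /=; rewrite !mulr1.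
by rewrite /EE (E_split (fun _ => 1) (fun _ => 1)) E1_one mulr1.
Qed.

Lemma sp_ge0 s : 0 <= sample_prob p s.
Proof.
apply: prodr_ge0 => t _; apply: prodr_ge0 => j _; by case: (Hp t) => H _.
Qed.

Lemma EE_U q w : EE (Ustat q w) = \sum_i w i * Dl q i ^+ 2.
Proof.
rewrite /EE /Ustat.
under eq_bigr do rewrite mulr_sumr.
rewrite exchange_big /=; apply: eq_bigr => i _.
under eq_bigr do rewrite mulrCA.
rewrite -mulr_sumr; congr (_ * _).
by rewrite (E_split (Aof q i) (Aof q i)) E1_A expr2.
Qed.

Lemma EE_U2 q w : EE (fun s => Ustat q w s ^+ 2) =
  \sum_i \sum_j w i * w j * (Dl q i * Dl q j + Sg i j) ^+ 2.
Proof.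
rewrite /EE /Ustat.
transitivity (\sum_s \sum_i \sum_j w i * w j * (sample_prob p s *
   ((fun x => Aof q i x * Aof q j x) (Xs s) * (fun x => Aof q i x * Aof q j x) (Ys s)))).
  apply: eq_bigr => s _; rewrite expr2 big_distrl mulr_sumr; apply: eq_bigr => i _.
  rewrite big_distrr mulr_sumr; apply: eq_bigr => j _ /=; ring.
rewrite exchange_big; apply: eq_bigr => i _.
rewrite exchange_big; apply: eq_bigr => j _.
by rewrite -mulr_sumr (E_split (fun x => Aof q i x * Aof q j x) (fun x => Aof q i x * Aof q j x)) E1_AA expr2.
Qed.

Lemma EE_quad (V : samples d T -> R) a b c :
  \sum_s sample_prob p s * (a * V s ^+ 2 + b * V s + c) =
  a * EE (fun s => V s ^+ 2) + b * EE V + c.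
Proof.
rewrite /EE.
transitivity (\sum_s (a * (sample_prob p s * V s ^+ 2) + b * (sample_prob p s * V s)
   + c * (sample_prob p s * 1))).
  by apply: eq_bigr => s _; ring.
rewrite !big_split /= -!mulr_sumr.
have := EE_one; rewrite /EE => ->; by rewrite mulr1.
Qed.


Lemma p_ge0 t i : 0 <= p t i.
Proof. by case: (Hp t). Qed.

Lemma p_le1 t i : p t i <= 1.
Proof.
rewrite -(sum1 t) (bigD1 i) //= lerDl; apply: sumr_ge0 => j _; exact: p_ge0.
Qed.

Definition Pm i : R := \sum_t p t i.
Definition Cm i j : R := \sum_t p t i * p t j.

Lemma Sg_eq i j : Sg i j = (i == j)%:R * Pm i - Cm i j.
Proof. by rewrite /Sg sumrB /Pm mulr_sumr. Qed.

Lemma Cm_sym i j : Cm i j = Cm j i.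
Proof. by rewrite /Cm; apply: eq_bigr => t _; rewrite mulrC. Qed.

Lemma Cm_ge0 i j : 0 <= Cm i j.
Proof. apply: sumr_ge0 => t _; apply: mulr_ge0; exact: p_ge0. Qed.

Lemma Cm_le i j : Cm i j <= Pm i.
Proof.
apply: ler_sum => t _; rewrite -[leRHS]mulr1; apply: ler_wpM2l; [exact: p_ge0|exact: p_le1].
Qed.

Lemma Cm_sum i : \sum_j Cm i j = Pm i.
Proof.
rewrite /Cm exchange_big /Pm; apply: eq_bigr => t _.
by rewrite -mulr_sumr sum1 mulr1.
Qed.

Lemma cross_bound (w D : 'I_d -> R) :
  \sum_i \sum_j w i * w j * (D i * D j * Sg i j) <= \sum_i w i ^+ 2 * D i ^+ 2 * Pm i.
Proof.
have -> : \sum_i \sum_j w i * w j * (D i * D j * Sg i j) =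
  \sum_t (\sum_i w i ^+ 2 * D i ^+ 2 * p t i - (\sum_i w i * D i * p t i) ^+ 2).
  rewrite /Sg.
  under eq_bigr do under eq_bigr do rewrite mulr_sumr mulr_sumr.
  under eq_bigr do rewrite exchange_big.
  rewrite exchange_big; apply: eq_bigr => t _.
  rewrite [(\sum_i _) ^+ 2]expr2 mulr_suml -sumrB; apply: eq_bigr => i _.
  rewrite mulr_sumr.
  rewrite (eq_bigr (fun j => w i * w j * D i * D j * (i == j)%:R * p t i
     - w i * D i * p t i * (w j * D j * p t j))); last by move=> j _; ring.
  rewrite sumrB; congr (_ - _).
  rewrite (bigD1 i) //= eqxx big1 ?addr0; first by rewrite /= ?mulr1n; ring.
  by move=> j; rewrite eq_sym => /negbTE ->; rewrite mulr0 mul0r.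
apply: (le_trans (y := \sum_t \sum_i w i ^+ 2 * D i ^+ 2 * p t i)).
  apply: ler_sum => t _.
  have := sqr_ge0 (\sum_i w i * D i * p t i).
  lra.
rewrite exchange_big /Pm le_eqVlt; apply/orP; left; apply/eqP; apply: eq_bigr => i _; by rewrite mulr_sumr.
Qed.


Lemma Z_bound (w : 'I_d -> R) :
  \sum_i \sum_j w i ^+ 2 * Cm i j ^+ 2 <= \sum_i w i ^+ 2 * Pm i ^+ 2.
Proof.
apply: ler_sum => i _.
apply: (le_trans (y := \sum_j w i ^+ 2 * Pm i * Cm i j)).
  apply: ler_sum => j _.
  have h1 := Cm_ge0 i j; have h2 := Cm_le i j; have h3 := sqr_ge0 (w i).
  rewrite -mulrA; apply: ler_wpM2l => //; nra.
by rewrite -mulr_sumr Cm_sum -mulrA -expr2 lexx.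
Qed.

Lemma sq_bound (w : 'I_d -> R) : (forall i, 0 <= w i) ->
  \sum_i \sum_j w i * w j * Sg i j ^+ 2 <= 4 * \sum_i w i ^+ 2 * Pm i ^+ 2.
Proof.
move=> Hw.
apply: (le_trans (y := \sum_i \sum_j (2 * ((i == j)%:R * (w i * w j * Pm i ^+ 2))
   + (w i ^+ 2 * Cm i j ^+ 2 + w j ^+ 2 * Cm j i ^+ 2)))).
  apply: ler_sum => i _; apply: ler_sum => j _.
  rewrite Sg_eq (Cm_sym j i).
  have h1 := Hw i; have h2 := Hw j; have h3 := Cm_ge0 i j.
  have h4 : 0 <= w i * w j by apply: mulr_ge0.
  have h5 : 0 <= (w i - w j) ^+ 2 * Cm i j ^+ 2 by apply: mulr_ge0; apply: sqr_ge0.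
  case: (i == j) => /=; rewrite ?mul1r ?mul0r ?mulr0 ?add0r ?sub0r.
    have h6 : 0 <= w i * w j * (Pm i + Cm i j) ^+ 2 by apply: mulr_ge0 => //; apply: sqr_ge0.
    nra.
  nra.
under eq_bigr do rewrite !big_split /=.
rewrite !big_split /=.
have -> : \sum_i \sum_j w j ^+ 2 * Cm j i ^+ 2 = \sum_i \sum_j w i ^+ 2 * Cm i j ^+ 2.
  by rewrite exchange_big.
have -> : \sum_i \sum_j 2 * ((i == j)%:R * (w i * w j * Pm i ^+ 2)) =
    2 * \sum_i w i ^+ 2 * Pm i ^+ 2.
  rewrite mulr_sumr; apply: eq_bigr => i _; rewrite -mulr_sumr; congr (_ * _).
  rewrite (bigD1 i) //= eqxx big1 ?addr0; first by rewrite /= ?mulr1n; ring.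
  by move=> j; rewrite eq_sym => /negbTE ->; rewrite mul0r.
have := Z_bound w; lra.
Qed.

Lemma var_bound q (w : 'I_d -> R) : (forall i, 0 <= w i) ->
  \sum_i \sum_j w i * w j * (Dl q i * Dl q j + Sg i j) ^+ 2
   - (\sum_i w i * Dl q i ^+ 2) ^+ 2
  <= 2 * \sum_i w i ^+ 2 * Dl q i ^+ 2 * Pm i + 4 * \sum_i w i ^+ 2 * Pm i ^+ 2.
Proof.
move=> Hw.
set D := Dl q.
have -> : (\sum_i w i * D i ^+ 2) ^+ 2 = \sum_i \sum_j w i * w j * (D i ^+ 2 * D j ^+ 2).
  rewrite expr2 mulr_suml; apply: eq_bigr => i _; rewrite mulr_sumr; apply: eq_bigr => j _; ring.
have -> : \sum_i \sum_j w i * w j * (D i * D j + Sg i j) ^+ 2 -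
   \sum_i \sum_j w i * w j * (D i ^+ 2 * D j ^+ 2) =
   2 * (\sum_i \sum_j w i * w j * (D i * D j * Sg i j)) + \sum_i \sum_j w i * w j * Sg i j ^+ 2.
  rewrite -sumrB mulr_sumr -big_split; apply: eq_bigr => i _.
  rewrite -sumrB mulr_sumr -big_split; apply: eq_bigr => j _ /=; ring.
have := cross_bound w D; have := sq_bound w Hw; lra.
Qed.

End Expect.

Definition wt d (q : {ffun 'I_d -> R}) (i : 'I_d) : R := (q i + (d%:R)^-1)^-1.
Arguments wt {d}.

Lemma wt_facts d (q : {ffun 'I_d -> R}) i : (1 <= d)%N -> is_distr q ->
  [/\ 0 < wt q i, wt q i <= d%:R, wt q i * q i <= 1, 0 <= wt q i * q i
    & wt q i * (q i + (d%:R)^-1) = 1].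
Proof.
move=> Hd [Hq0 _].
have hd : 1 <= d%:R :> R by rewrite ler1n.
have hdi : 0 < (d%:R : R)^-1 by rewrite invr_gt0; lra.
have hv : 0 < q i + (d%:R)^-1 by have := Hq0 i; lra.
have hw : 0 < wt q i by rewrite /wt invr_gt0.
have h1 : wt q i * (q i + (d%:R)^-1) = 1 by rewrite /wt mulVf //; lra.
have hdd : (d%:R : R) * (d%:R)^-1 = 1 by rewrite mulfV //; lra.
have := Hq0 i => hq.
split => //.
- nra.
- nra.
- by apply: mulr_ge0 => //; apply: ltW.
Qed.

Lemma sum_v d (q : {ffun 'I_d -> R}) : (1 <= d)%N -> is_distr q ->
  \sum_i (q i + (d%:R)^-1) = 2.
Proof.
move=> Hd [_ Hq1].
rewrite big_split /= Hq1 sumr_const card_ord -[_^-1 *+ d]mulr_natr mulVf //.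
by rewrite pnatr_eq0 -lt0n.
Qed.
Lemma single_le (d : nat) (f : 'I_d -> R) i : (forall j, 0 <= f j) -> f i <= \sum_j f j.
Proof. move=> H; rewrite (bigD1 i) //= lerDl; apply: sumr_ge0 => j _; exact: H. Qed.

Lemma amgm_i (w v x e : R) : 0 < w -> 0 < v -> w * v = 1 ->
  2 * e * `|x| <= w * x ^+ 2 + e ^+ 2 * v.
Proof.
move=> hw hv hwv.
have h : w * x ^+ 2 + e ^+ 2 * v - 2 * e * `|x| = w * (`|x| - e * v) ^+ 2.
  have -> : w * (`|x| - e * v) ^+ 2 = w * `|x| ^+ 2 - 2 * e * `|x| * (w * v) + e ^+ 2 * v * (w * v)
    by ring.
  by rewrite hwv real_normK ?num_real //; ring.
have : 0 <= w * (`|x| - e * v) ^+ 2 by apply: mulr_ge0; [apply: ltW | apply: sqr_ge0].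
rewrite -h; lra.
Qed.


Lemma setup_num (K s dd e2 T : R) : 0 < K -> 0 <= s -> s ^+ 2 = dd -> 1 <= dd -> 0 < e2 ->
  K * s / e2 <= T ->
  [/\ K <= T * e2, K ^+ 2 * dd <= (T * e2) ^+ 2 & 0 < T].
Proof.
move=> hK hs hs2 hd he; rewrite ler_pdivrMr // => h.
have hs1 : 1 <= s by nra.
have h1 : K <= T * e2 by nra.
split => //.
- rewrite -hs2.
  have h0 : 0 <= K * s by nra.
  nra.
- have : 0 < T * e2 by lra.
  by rewrite pmulr_lgt0.
Qed.

Lemma null_num (K T e2 dd X : R) : (4*10*10*10) <= K -> 0 < T -> 0 <= dd ->
  K ^+ 2 * dd <= (T * e2) ^+ 2 -> X <= 4 * (T ^+ 2 * dd) ->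
  X <= 1 / 100 * (T ^+ 2 * e2) ^+ 2.
Proof.
move=> hK hT hd h1 h2.
have hK2 : (4*10*10) <= K ^+ 2.
  have hK0 : 0 <= K by lra.
  have := ler_wpM2r hK0 hK; rewrite -expr2; lra.
have hdK : (4*10*10) * dd <= K ^+ 2 * dd by apply: ler_wpM2r.
have hT2 : 0 <= T ^+ 2 by apply: sqr_ge0.
have h3 : T ^+ 2 * ((4*10*10) * dd) <= T ^+ 2 * (T * e2) ^+ 2 by apply: ler_wpM2l => //; lra.
have -> : (T ^+ 2 * e2) ^+ 2 = T ^+ 2 * (T * e2) ^+ 2 by ring.
have e1 : T ^+ 2 * ((4*10*10) * dd) = (4*10*10) * (T ^+ 2 * dd) by ring.
rewrite e1 in h3.
lra.
Qed.

Lemma tail_null (tau u : R) : 0 < tau -> ~~ (u <= tau) -> 1 <= (tau ^+ 2)^-1 * u ^+ 2.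
Proof.
move=> ht hu.
have hU : tau < u by rewrite ltNge.
rewrite mulrC ler_pdivlMr ?mul1r; last by apply: exprn_gt0.
rewrite !expr2; apply: ler_pM; lra.
Qed.

Lemma tail_far (mu tau u : R) : tau < mu -> u <= tau ->
  1 <= ((mu - tau) ^+ 2)^-1 * (u - mu) ^+ 2.
Proof.
move=> ht hu.
rewrite mulrC ler_pdivlMr ?mul1r; last by apply: exprn_gt0; lra.
have -> : (u - mu) ^+ 2 = (mu - u) * (mu - u) by ring.
rewrite expr2; apply: ler_pM; lra.
Qed.

Lemma inv_sq_ge0 (x y : R) : 0 <= (x ^+ 2)^-1 * y ^+ 2.
Proof. by apply: mulr_ge0; [rewrite invr_ge0; apply: sqr_ge0 | apply: sqr_ge0]. Qed.

Lemma far_F (K T e2 E' dd : R) : 0 < K -> 0 < T -> 0 < e2 -> e2 <= 1 -> 2 * e2 < E' ->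
  K <= T * e2 -> K ^+ 2 * dd <= (T * e2) ^+ 2 ->
  [/\ 2 * K <= T * E', 2 * K ^+ 2 * dd <= T ^+ 2 * E' & 4 * K ^+ 2 * dd <= T ^+ 2 * E' ^+ 2].
Proof.
move=> hK hT he he1 hE h1 h2.
have a0 : T * (2 * e2) <= T * E' by apply: ler_wpM2l; lra.
split.
- lra.
- have hT2 : 0 <= T ^+ 2 by apply: sqr_ge0.
  have a1 : T ^+ 2 * (2 * e2) <= T ^+ 2 * E' by apply: ler_wpM2l; lra.
  have a2 : T ^+ 2 * (e2 * e2) <= T ^+ 2 * e2.
    apply: ler_wpM2l => //; rewrite -[X in _ <= X]mulr1; apply: ler_wpM2l; lra.
  have : (T * e2) ^+ 2 = T ^+ 2 * (e2 * e2) by ring.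
  have : T ^+ 2 * (2 * e2) = 2 * (T ^+ 2 * e2) by ring.
  lra.
- have h0 : 0 <= T * (2 * e2) by apply: mulr_ge0; lra.
  have := ler_pM h0 h0 a0 a0.
  have : T * (2 * e2) * (T * (2 * e2)) = 4 * (T * e2) ^+ 2 by ring.
  have : T * E' * (T * E') = T ^+ 2 * E' ^+ 2 by ring.
  lra.
Qed.

Lemma wdx_num (K T E' dd x a : R) : 0 < K -> 0 < T -> 0 < E' -> 0 <= a -> a <= E' ->
  0 <= dd -> x ^+ 2 <= dd * a -> 2 * K ^+ 2 * dd <= T ^+ 2 * E' -> x <= T * E' / K.
Proof.
move=> hK hT hE ha haE hd h2 hF.
have h3 : dd * a <= dd * E' by apply: ler_wpM2l.
have h4 : 2 * K ^+ 2 * dd * E' <= T ^+ 2 * E' * E' by apply: ler_wpM2r; lra.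
have h5 : (T * E' / K) ^+ 2 = T ^+ 2 * E' * E' / K ^+ 2 by field; lra.
have h6 : 0 <= T * E' / K by apply: divr_ge0; apply: ltW; [apply: mulr_gt0|].
have hK2 : 0 < K ^+ 2 by apply: exprn_gt0.
have h7 : dd * E' <= (T * E' / K) ^+ 2.
  rewrite h5 ler_pdivlMr //.
  have : 0 <= dd * E' * K ^+ 2 by apply: mulr_ge0; [apply: mulr_ge0|]; lra.
  have : 2 * K ^+ 2 * dd * E' = 2 * (dd * E' * K ^+ 2) by ring.
  lra.
move: h6 h7; set y := T * E' / K => h6 h7.
have h8 : x ^+ 2 <= y ^+ 2 by lra.
move: h8; rewrite !expr2 => h8; nra.
Qed.

Lemma far_numeric (K a e dR : R) : (4*10*10*10) <= K ->
  0 < a -> 0 < e -> 1 <= dR -> 2 * K <= a * e ->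
  2 * K ^+ 2 * dR <= a ^+ 2 * e -> 4 * K ^+ 2 * dR <= a ^+ 2 * e ^+ 2 ->
  (4*10*10) * (2 * a ^+ 3 * e * (1 + a * e / K) + 4 * a ^+ 2 * (2 * dR + 2 * dR * e))
   <= a ^+ 4 * e ^+ 2.
Proof.
move=> hK ha he hd h1 h2 h3.
have hK0 : 0 < K by lra.
have hKK : (4*10*10*10) * (4*10*10*10) <= K ^+ 2.
  rewrite expr2; apply: ler_pM => //; lra.
have hz2 : a ^+ 2 * e ^+ 2 = (a * e) ^+ 2 by ring.
have hB : 2 * K ^+ 2 * (dR * e) <= (a * e) ^+ 2.
  have := ler_wpM2r (ltW he) h2.
  have -> : a ^+ 2 * e * e = (a * e) ^+ 2 by ring.
  have -> : 2 * K ^+ 2 * dR * e = 2 * K ^+ 2 * (dR * e) by ring.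
  done.
rewrite hz2 in h3.
have hz0 : 0 <= a * e by apply: mulr_ge0; apply: ltW.
have hZ0 : 0 <= (a * e) ^+ 2 by apply: sqr_ge0.
have hA : (8*10*10*10) * (a * e) <= (a * e) ^+ 2.
  have := ler_wpM2l hz0 h1.
  have -> : a * e * (a * e) = (a * e) ^+ 2 by ring.
  have -> : a * e * (2 * K) = 2 * K * (a * e) by ring.
  have : (8*10*10*10) * (a * e) <= 2 * K * (a * e) by apply: ler_wpM2r => //; lra.
  lra.
have hC : (8*10*10) * ((a * e) ^+ 2 / K) <= (8*10*10) * ((a * e) ^+ 2 / (4*10*10*10)).
  apply: ler_wpM2l; first by lra.
  by apply: ler_wpM2l => //; rewrite lef_pV2 ?posrE //; lra.
have hde : 0 <= dR * e by apply: mulr_ge0; lra.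
have hD : (4*10*10*10) * (4*10*10*10) * dR <= K ^+ 2 * dR by apply: ler_wpM2r => //; lra.
have hE : (4*10*10*10) * (4*10*10*10) * (dR * e) <= K ^+ 2 * (dR * e) by apply: ler_wpM2r.
have key : (8*10*10) * (a * e) + (8*10*10) * ((a * e) ^+ 2 / K) + (32*10*10) * dR + (32*10*10) * (dR * e) <= (a * e) ^+ 2.
  move: hA hB h3 hde hC hD hE hZ0.
  set Z := (a * e) ^+ 2; set z := a * e; set y := dR * e; set W := Z / K; set V := K ^+ 2.
  clearbody Z z y W V => hA hB h3 hde hC hD hE hZ0.
  have e1 : 2 * V * y = 2 * (V * y) by ring.
  have e2 : 4 * V * dR = 4 * (V * dR) by ring.
  have e3 : (8*10*10) * (Z / (4*10*10*10)) = Z / 5 by field.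
  rewrite e1 in hB; rewrite e2 in h3; rewrite e3 in hC.
  lra.
have ha2 : 0 < a ^+ 2 by apply: exprn_gt0.
have key2 := ler_wpM2l (ltW ha2) key.
apply: (le_trans _ (le_trans key2 _)).
  rewrite le_eqVlt; apply/orP; left; apply/eqP; field; lra.
rewrite le_eqVlt; apply/orP; left; apply/eqP; ring.
Qed.

Lemma far_final (mu tau EU2 B : R) : 0 < tau -> 2 * tau < mu ->
  (4*10*10) * B <= mu ^+ 2 -> EU2 - mu ^+ 2 <= B ->
  ((mu - tau) ^+ 2)^-1 * (EU2 - mu ^+ 2) <= 1 / 100.
Proof.
move=> ht hm h1 h2.
rewrite mulrC ler_pdivrMr; last by apply: exprn_gt0; lra.
have h3 : mu <= 2 * (mu - tau) by lra.
have h0 : 0 <= mu by lra.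
have := ler_pM h0 h0 h3 h3.
rewrite expr2 in h1 *.
have : 2 * (mu - tau) * (2 * (mu - tau)) = 4 * ((mu - tau) * (mu - tau)) by ring.
lra.
Qed.

Arguments setup_num {K s dd e2 T}.
Arguments null_num {K T e2 dd X}.
Arguments tail_null {tau u}.
Arguments tail_far {mu tau u}.
Arguments far_F {K T e2 E' dd}.
Arguments wdx_num {K T E' dd x a}.
Arguments far_numeric {K a e dR}.
Arguments far_final {mu tau EU2 B}.
Arguments amgm_i {w v x e}.

Theorem theorem2p1 :
  exists K : R, 0 < K /\
  forall (d : nat) (q : {ffun 'I_d -> R}) (eps : R) (T : nat),
    (1 <= d)%N -> is_distr q -> 0 < eps ->
    K * Num.sqrt (d%:R) / eps ^+ 2 <= T%:R ->
    exists A : samples d T -> R,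
      is_algorithm A /\
      forall p : 'I_T -> {ffun 'I_d -> R},
        (forall t, is_distr (p t)) ->
        (pavg p = q -> 99 / 100 <= accept_prob A p) /\
        (eps < dTV (pavg p) q -> accept_prob A p <= 1 / 100).
Proof.
exists (4*10*10*10).
pose K := (4*10*10*10 : R).
rewrite -/K.
have hK : 4*10*10*10 <= K by rewrite /K lexx.
clearbody K.
have hK0 : 0 < K by lra.
split => //.
move=> d q eps T Hd Hq Heps HT.
have hd : 1 <= d%:R :> R by rewrite ler1n.
have hs0 := sqrtr_ge0 (d%:R : R).
have hs2 : Num.sqrt (d%:R : R) ^+ 2 = d%:R by apply: sqr_sqrtr; lra.
have he2 : 0 < eps ^+ 2 by apply: exprn_gt0.
have [HTK HT2 hT] := setup_num hK0 hs0 hs2 hd he2 HT.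
clear HT hs0 hs2.
set tau := T%:R ^+ 2 * eps ^+ 2.
have htau : 0 < tau by rewrite /tau; apply: mulr_gt0 => //; apply: exprn_gt0.
set w := wt q.
exists (fun s => if Ustat d T q w s <= tau then 1 else 0).
split.
  by move=> s; case: ifP => _; rewrite ?lexx ?ler01.
move=> p Hp.
set U := Ustat d T q w.
have wf : forall i, [/\ 0 < w i, w i <= d%:R, w i * q i <= 1, 0 <= w i * q i
    & w i * (q i + (d%:R)^-1) = 1].
  by move=> i; exact: (wt_facts d q i Hd Hq).
have Hw0 : forall i, 0 <= w i by move=> i; case: (wf i) => *; apply: ltW.
set pi := pavg p.
have hPm : forall i, Pm d T p i = T%:R * pi i.
  by move=> i; rewrite /pi /pavg ffunE /Pm mulrC divfK //; lra.
have hDl : forall i, Dl d T p q i = T%:R * (pi i - q i).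
  move=> i; rewrite /Dl sumrB -/(Pm d T p i) hPm sumr_const card_ord -mulr_natl; ring.
set E' := \sum_i w i * (pi i - q i) ^+ 2.
have EUe : EE d T p U = T%:R ^+ 2 * E'.
  rewrite /U EE_U // /E' mulr_sumr; apply: eq_bigr => i _; rewrite hDl; ring.
have VB := var_bound d T p Hp q w Hw0.
rewrite -(EE_U2 d T p Hp q w) -(EE_U d T p Hp q w) -/U EUe in VB.
have S1e : \sum_i w i ^+ 2 * Dl d T p q i ^+ 2 * Pm d T p i =
    T%:R ^+ 3 * \sum_i w i ^+ 2 * (pi i - q i) ^+ 2 * pi i.
  rewrite mulr_sumr; apply: eq_bigr => i _; rewrite hDl hPm; ring.
have S2e : \sum_i w i ^+ 2 * Pm d T p i ^+ 2 = T%:R ^+ 2 * \sum_i (w i * pi i) ^+ 2.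
  rewrite mulr_sumr; apply: eq_bigr => i _; rewrite hPm; ring.
rewrite S1e S2e in VB.
set EU2 := EE d T p (fun s => U s ^+ 2) in VB *.
split.
- move=> Hnull.
  have hpi : forall i, pi i = q i by move=> i; rewrite Hnull.
  have E0 : E' = 0 by rewrite /E'; apply: big1 => i _; rewrite hpi subrr expr0n /= mulr0.
  have S10 : \sum_i w i ^+ 2 * (pi i - q i) ^+ 2 * pi i = 0.
    by apply: big1 => i _; rewrite hpi subrr expr0n /= mulr0 mul0r.
  have S2b : \sum_i (w i * pi i) ^+ 2 <= d%:R.
    have -> : (d%:R : R) = \sum_(i < d) 1 by rewrite sumr_const card_ord.
    apply: ler_sum => i _.
    case: (wf i) => _ _ h1 h2 _.
    rewrite hpi expr2; have := ler_pM h2 h2 h1 h1; by rewrite mulr1.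
  rewrite E0 S10 !mulr0 expr0n /= subr0 ?add0r in VB.
  have key : \sum_s sample_prob p s * (- (tau ^+ 2)^-1 * U s ^+ 2 + 0 * U s + 1)
      <= accept_prob (fun s => if U s <= tau then 1 else 0) p.
    rewrite /accept_prob; apply: ler_sum => s _; apply: ler_wpM2l; first exact: (sp_ge0 d T p Hp s).
    have hi := inv_sq_ge0 tau (U s).
    case: ifP => h; first lra.
    have := tail_null htau (negbT h).
    lra.
  rewrite EE_quad // -/EU2 in key.
  have hX : EU2 <= 4 * (T%:R ^+ 2 * d%:R).
    have : T%:R ^+ 2 * \sum_i (w i * pi i) ^+ 2 <= T%:R ^+ 2 * d%:R.
      by apply: ler_wpM2l; [apply: sqr_ge0 | exact: S2b].
    lra.
  have hEU2 := null_num hK hT (ltW (lt_le_trans ltr01 hd)) HT2 hX.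
  have : (tau ^+ 2)^-1 * EU2 <= 1 / 100.
    by rewrite mulrC ler_pdivrMr //; apply: exprn_gt0.
  lra.
- move=> Hfar.
  have hpi0 : forall i, 0 <= pi i.
    move=> i; rewrite /pi /pavg ffunE; apply: divr_ge0; last by apply: ler0n.
    by apply: sumr_ge0 => t _; apply: (p_ge0 d T p Hp).
  have hsum_pi : \sum_i pi i = 1.
    rewrite /pi /pavg; under eq_bigr do rewrite ffunE.
    rewrite -mulr_suml exchange_big /=.
    under eq_bigr do rewrite (sum1 d T p Hp).
    rewrite sumr_const card_ord mulfV //; lra.
  case: (Hq) => hq0 hsumq.
  move: Hfar; rewrite /dTV => Hfar.
  have hS2 : \sum_i `|pi i - q i| <= 2.
    apply: (le_trans (y := \sum_i (pi i + q i))).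
      apply: ler_sum => i _; rewrite ler_norml; have := hpi0 i; have := hq0 i.
      move=> h1 h2; apply/andP; split; lra.
    rewrite big_split /= hsum_pi hsumq; lra.
  have heps1 : eps < 1 by lra.
  have hamgm : 2 * eps * \sum_i `|pi i - q i| <= E' + eps ^+ 2 * 2.
    rewrite -[X in eps ^+ 2 * X](sum_v d q Hd Hq) mulr_sumr mulr_sumr /E' -big_split /=.
    apply: ler_sum => i _.
    case: (wf i) => hw _ _ _ hwv.
    have hv : 0 < q i + (d%:R)^-1.
      have := hq0 i; have : 0 < (d%:R : R)^-1 by rewrite invr_gt0; lra.
      lra.
    exact: (amgm_i hw hv hwv).
  have hE' : 2 * eps ^+ 2 < E'.
    have h1 : 2 * eps * (2 * eps) < 2 * eps * \sum_i `|pi i - q i|.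
      by rewrite ltr_pM2l; lra.
    have : 2 * eps * (2 * eps) = 4 * eps ^+ 2 by ring.
    lra.
  have hE'0 : 0 < E' by lra.
  have he21 : eps ^+ 2 <= 1.
    rewrite expr2 -[X in _ <= X]mulr1; apply: ler_pM; lra.
  have [F1 F2 F3] := far_F hK0 hT he2 he21 hE' HTK HT2.
  have hwd : forall i, 0 <= w i * (pi i - q i) ^+ 2 /\ w i * (pi i - q i) ^+ 2 <= E'.
    move=> i; split; first by apply: mulr_ge0 => //; apply: sqr_ge0.
    apply: (single_le d (fun j => w j * (pi j - q j) ^+ 2) i) => j.
    by apply: mulr_ge0 => //; apply: sqr_ge0.
  have hbx : forall i, (w i * (pi i - q i)) ^+ 2 <= d%:R * (w i * (pi i - q i) ^+ 2).
    move=> i; case: (wf i) => hw hwd' _ _ _; case: (hwd i) => h0 _.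
    have -> : (w i * (pi i - q i)) ^+ 2 = w i * (w i * (pi i - q i) ^+ 2) by ring.
    by apply: ler_wpM2r.
  have hdd0 : 0 <= d%:R :> R by lra.
  have hwdx : forall i, w i * (pi i - q i) <= T%:R * E' / K.
    move=> i; case: (hwd i) => h0 h1.
    exact: (wdx_num hK0 hT hE'0 h0 h1 hdd0 (hbx i) F2).
  have S1b : \sum_i w i ^+ 2 * (pi i - q i) ^+ 2 * pi i <= E' * (1 + T%:R * E' / K).
    have hper : forall i, w i * pi i <= 1 + T%:R * E' / K.
      move=> i; case: (wf i) => _ _ hwq _ _.
      have hh : w i * pi i = w i * q i + w i * (pi i - q i) by ring.
      have := hwdx i; move: hh hwq; set M := T%:R * E' / K; clearbody M.
      move=> hh hwq hM; lra.
    rewrite /E' mulr_suml; apply: ler_sum => i _.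
    case: (hwd i) => h0 _; have h := hper i.
    have := ler_wpM2l h0 h.
    by have -> : w i ^+ 2 * (pi i - q i) ^+ 2 * pi i = w i * (pi i - q i) ^+ 2 * (w i * pi i) by ring.
  have S2b : \sum_i (w i * pi i) ^+ 2 <= 2 * d%:R + 2 * d%:R * E'.
    have -> : 2 * d%:R + 2 * d%:R * E' = \sum_i (2 + 2 * d%:R * (w i * (pi i - q i) ^+ 2)).
      by rewrite big_split /= sumr_const card_ord -mulr_sumr /E' mulr_natr.
    apply: ler_sum => i _.
    case: (wf i) => _ _ hwq hwq0 _.
    have hh : w i * pi i = w i * q i + w i * (pi i - q i) by ring.
    have ha : (w i * q i) ^+ 2 <= 1.
      by rewrite expr2; have := ler_pM hwq0 hwq0 hwq hwq; rewrite mulr1.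
    have hb := hbx i.
    rewrite hh.
    have hs := sqr_ge0 (w i * q i - w i * (pi i - q i)).
    move: ha hb hs; set a := w i * q i; set b := w i * (pi i - q i); set c := w i * (pi i - q i) ^+ 2.
    move=> ha hb hs.
    have : (a + b) ^+ 2 + (a - b) ^+ 2 = 2 * a ^+ 2 + 2 * b ^+ 2 by ring.
    lra.
  have hT2 : 0 < T%:R ^+ 2 :> R by apply: exprn_gt0.
  have hmu : 2 * tau < T%:R ^+ 2 * E'.
    have -> : 2 * tau = T%:R ^+ 2 * (2 * eps ^+ 2) by rewrite /tau; ring.
    by rewrite ltr_pM2l.
  set mu := T%:R ^+ 2 * E' in hmu EUe VB *.
  set c0 := ((mu - tau) ^+ 2)^-1.
  have key : accept_prob (fun s => if U s <= tau then 1 else 0) p <=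
      \sum_s sample_prob p s * (c0 * U s ^+ 2 + (- 2 * mu * c0) * U s + mu ^+ 2 * c0).
    rewrite /accept_prob; apply: ler_sum => s _; apply: ler_wpM2l; first exact: (sp_ge0 d T p Hp s).
    have -> : c0 * U s ^+ 2 + (- 2 * mu * c0) * U s + mu ^+ 2 * c0 = c0 * (U s - mu) ^+ 2.
      by rewrite /c0; ring.
    case: ifP => h.
      apply: tail_far => //; lra.
    exact: inv_sq_ge0.
  rewrite EE_quad // -/EU2 EUe in key.
  have hT3 : 0 <= T%:R ^+ 3 :> R by apply: exprn_ge0; lra.
  have hB1 := ler_wpM2l hT3 S1b.
  have hB2 := ler_wpM2l (ltW hT2) S2b.
  have hN := far_numeric hK hT hE'0 hd F1 F2 F3.
  have hmu2 : mu ^+ 2 = T%:R ^+ 4 * E' ^+ 2 by rewrite /mu; ring.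
  set B := 2 * (T%:R ^+ 3 * (E' * (1 + T%:R * E' / K))) + 4 * (T%:R ^+ 2 * (2 * d%:R + 2 * d%:R * E')).
  have hVB : EU2 - mu ^+ 2 <= B by rewrite /B; lra.
  have h400 : 4*10*10 * B <= mu ^+ 2.
    rewrite hmu2 /B.
    have -> : 2 * (T%:R ^+ 3 * (E' * (1 + T%:R * E' / K))) = 2 * T%:R ^+ 3 * E' * (1 + T%:R * E' / K) by ring.
    have -> : 4 * (T%:R ^+ 2 * (2 * d%:R + 2 * d%:R * E')) = 4 * T%:R ^+ 2 * (2 * d%:R + 2 * d%:R * E') by ring.
    exact: hN.
  have hfin := far_final htau hmu h400 hVB.
  have e : c0 * EU2 + - 2 * mu * c0 * mu + mu ^+ 2 * c0 = c0 * (EU2 - mu ^+ 2) by ring.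
  rewrite e in key.
  move: key hfin; rewrite -/c0; set X := c0 * (EU2 - mu ^+ 2); set Y := accept_prob _ p.
  clearbody X Y; lra.
Qed.
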